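(* Let $N,d_h,d_e\ge1$ and let $\mathcal{M}$ be the space of triples $\mathbf{Z}=(\mathbf{X},\mathbf{H},\mathbf{A})$ with $\mathbf{X}\in\mathbb{R}^{N\times 3}$ zero-centered (rows sum to zero), $\mathbf{H}\in\mathbb{R}^{N\times d_h}$, $\mathbf{A}\in\mathbb{R}^{N\times N\times d_e}$. Let $\mathcal{G}=SO(3)\times S_N$ act by $(R,\pi)\cdot(\mathbf{X},\mathbf{H},\mathbf{A})=(\pi(\mathbf{X})R^\top,\pi(\mathbf{H}),\pi(\mathbf{A}))$, where $\pi$ permutes rows of $\mathbf{X},\mathbf{H}$ and simultaneously rows and columns of $\mathbf{A}$, and let $\lambda$ be the Haar probability measure on $\mathcal{G}$. Let $\mu$ be a $\mathcal{G}$-invariant probability measure on $\mathcal{M}$ under which the stabilizer $\{g:g\cdot\mathbf{Z}=\mathbf{Z}\}$ is trivial almost surely. Let $\Psi:\mathcal{M}\to\mathcal{M}$ be a measurable canonicalization map ($\Psi(\mathbf{Z})$ lies in the orbit of $\mathbf{Z}$ and $\Psi(g\cdot\mathbf{Z})=\Psi(\mathbf{Z})$ for all $g$), defined $\mu$-a.s., with slice $S=\Psi(\mathcal{M})$, and let $\nu:=\Psi_{\#}\mu$. Let $\varepsilon>0$ and let $\hat\mu_{\mathrm{eq}}$ be a $\mathcal{G}$-invariant probability measure on $\mathcal{M}$ (the output of an equivariant baseline model) with $\mathrm{TV}(\hat\mu_{\mathrm{eq}},\mu)<\varepsilon$, and set $\hat\nu_{\mathrm{eq}}:=\Psi_{\#}\hat\mu_{\mathrm{eq}}$.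 Let $\{\hat\nu_\theta\}_\theta$ be a family of probability measures on $S$ such that $$\inf_\theta \mathrm{TV}(\hat\nu_\theta,\nu)\le\mathrm{TV}(\hat\nu_{\mathrm{eq}},\nu).$$ Then there exists $\theta$ such that the Haar-randomized model $$\hat\mu_\theta:=\int_S\Big(\int_{\mathcal{G}}\delta_{g\cdot\mathbf{Z}}\,d\lambda(g)\Big)\,d\hat\nu_\theta(\mathbf{Z})$$ satisfies $\mathrm{TV}(\hat\mu_\theta,\mu)<\varepsilon$.
   Context: $\mathrm{TV}$ denotes total variation distance; $\Psi_{\#}\mu$ denotes the pushforward measure. *)

(* Defs.v *)
From HB Require Import structures.
From mathcomp Require Import all_boot all_order all_algebra all_fingroup.
From mathcomp Require Import all_classical all_reals all_analysis.

Set Implicit Arguments.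
Unset Strict Implicit.
Unset Printing Implicit Defensive.

Import Order.TTheory GRing.Theory Num.Theory.
Local Open Scope classical_set_scope.
Local Open Scope ring_scope.

Section Setting.
Variables (R : realType) (N dh de : nat).

Definition zero_centered (X : 'M[R]_(N, 3)) : bool :=
  [forall j : 'I_3, \sum_(i < N) X i j == 0].

Record mol := Mol {
  molX : 'M[R]_(N, 3);
  molH : 'M[R]_(N, dh);
  molA : 'I_N -> 'I_N -> 'I_de -> R;
  molX_centered : zero_centered molX }.

Lemma zero_centered0 : zero_centered 0.
Proof. by apply/forallP => j; apply/eqP; apply: big1 => i _; rewrite mxE. Qed.

HB.instance Definition _ := gen_eqMixin mol.
HB.instance Definition _ := gen_choiceMixin mol.
HB.instance Definition _ :=
  isPointed.Build mol (@Mol 0 0 (fun _ _ _ => 0) zero_centered0).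

(* Borel (= product) sigma-algebra: generated by the coordinate maps. *)
Definition mol_gen : set (set mol) :=
  [set B | (exists (i : 'I_N) (j : 'I_3) (U : set R),
              measurable U /\ B = [set Z | U (molX Z i j)])
        \/ (exists (i : 'I_N) (k : 'I_dh) (U : set R),
              measurable U /\ B = [set Z | U (molH Z i k)])
        \/ (exists (i j : 'I_N) (k : 'I_de) (U : set R),
              measurable U /\ B = [set Z | U (molA Z i j k)])].

Definition M := g_sigma_algebraType mol_gen.

Record SO3 := MkSO3 {
  rotm :> 'M[R]_3;
  rotmP : (rotm *m rotm^T == 1%:M) && (\det rotm == 1) }.

Lemma so3_oneP : ((1%:M : 'M[R]_3) *m (1%:M)^T == 1%:M) && (\det (1%:M : 'M[R]_3) == 1).
Proof. by rewrite trmx1 mulmx1 det1 !eqxx. Qed.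

Definition so3_one : SO3 := MkSO3 so3_oneP.

Lemma so3_mulP (a b : SO3) :
  ((a *m b) *m (a *m b)^T == 1%:M) && (\det (a *m b) == 1).
Proof.
move: a b => [a /andP[/eqP ha /eqP da]] [b /andP[/eqP hb /eqP db]] /=.
rewrite trmx_mul mulmxA -(mulmxA a) hb mulmx1 ha eqxx /=.
by rewrite det_mulmx da db mulr1 eqxx.
Qed.

Definition so3_mul (a b : SO3) : SO3 := MkSO3 (so3_mulP a b).

Definition gcar := (SO3 * {perm 'I_N})%type.

HB.instance Definition _ := gen_eqMixin gcar.
HB.instance Definition _ := gen_choiceMixin gcar.
HB.instance Definition _ := isPointed.Build gcar (so3_one, 1%g).

(* Borel sigma-algebra of the compact group SO(3) x S_N
   (S_N discrete): generated by matrix entries and the permutation. *)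
Definition grp_gen : set (set gcar) :=
  [set B | (exists (i j : 'I_3) (U : set R),
              measurable U /\ B = [set g : gcar | U ((g.1 : 'M[R]_3) i j)])
        \/ (exists s : {perm 'I_N}, B = [set g : gcar | g.2 = s])].

Definition G := g_sigma_algebraType grp_gen.

Definition gone : G := (so3_one, 1%g).
Definition gmul (g h : G) : G := (so3_mul g.1 h.1, (g.2 * h.2)%g).

(* The action (R, pi) . (X, H, A) = (pi(X) R^T, pi(H), pi(A)),         *)
(* with (pi Y)_i = Y_{pi^-1 i} (rows; rows and columns for A).         *)

Lemma act_centered (r : 'M[R]_3) (p : {perm 'I_N}) (X : 'M[R]_(N, 3)) :
  zero_centered X -> zero_centered (\matrix_(i, j) (X *m r^T) (p i) j).
Proof.
move=> /forallP hX; apply/forallP => j; apply/eqP.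
under eq_bigr do rewrite mxE.
rewrite (reindex_inj (@perm_inj _ p^-1)) /=.
under eq_bigr do rewrite permKV mxE.
rewrite exchange_big /=.
apply: big1 => k _.
by rewrite -big_distrl /= (eqP (hX k)) mul0r.
Qed.

Definition mol_act (g : G) (Z : M) : M :=
  @Mol (\matrix_(i, j) (molX Z *m (g.1 : 'M[R]_3)^T) ((g.2)^-1%g i) j)
       (\matrix_(i, k) molH Z ((g.2)^-1%g i) k)
       (fun i j k => molA Z ((g.2)^-1%g i) ((g.2)^-1%g j) k)
       (act_centered (g.1 : 'M[R]_3) (g.2)^-1%g (molX_centered Z)).

(* Haar probability measure on the compact group G: a left-invariant
   probability measure, lam (g B) = lam B; stated with preimages
   (g B = (gmul g^-1)^-1 B). *)
Definition left_invariant (lam : set G -> \bar R) : Prop :=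
  forall (g : G) (B : set G), measurable B -> lam (gmul g @^-1` B) = lam B.

Definition G_invariant (m : set M -> \bar R) : Prop :=
  forall (g : G) (A : set M), measurable A -> m (mol_act g @^-1` A) = m A.

(* Haar-randomized model: A |-> \int_Z (\int_G delta_{g.Z}(A) dlam(g)) dnu(Z). *)
Definition haar_randomize (lam : set G -> \bar R)
  (nu : {measure set M -> \bar R}) : set M -> \bar R :=
  fun A => (\int[nu]_(Z in setT) lam [set g | A (mol_act g Z)])%E.

End Setting.

Definition TV d (T : measurableType d) (R : realType) (P Q : set T -> \bar R)
  : \bar R := ereal_sup [set (`|P A - Q A|)%E | A in measurable].

Arguments gone {R N}.
Arguments mol_act {R N dh de}.
Arguments left_invariant {R N}.
Arguments G_invariant {R N dh de}.
Arguments haar_randomize {R N dh de}.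

(* Main.v *)
Require Import Defs.
From HB Require Import structures.
From mathcomp Require Import all_boot all_order all_algebra all_fingroup.
From mathcomp Require Import all_classical all_reals all_analysis.
From mathcomp Require Import measurable_realfun.
From mathcomp Require Import lra.

Import Order.TTheory GRing.Theory Num.Theory.
Local Open Scope classical_set_scope.
Local Open Scope ring_scope.

Set Implicit Arguments. Unset Strict Implicit. Unset Printing Implicit Defensive.

Section FubSet.
Context (R : realType) d1 d2 (T1 : measurableType d1) (T2 : measurableType d2)
  (P1 : probability T1 R) (P2 : probability T2 R).
Local Open Scope ereal_scope.

Lemma sec1E (W : set (T1 * T2)) x : xsection W x = [set y | W (x, y)].
Proof. by apply/funext => y; rewrite /xsection /= in_setE. Qed.

Lemma sec2E (W : set (T1 * T2)) y : ysection W y = [set x | W (x, y)].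
Proof. by apply/funext => x; rewrite /ysection /= in_setE. Qed.

Lemma mfun_sec1 (W : set (T1 * T2)) : measurable W ->
  measurable_fun [set: T1] (fun x : T1 => P2 [set y | W (x, y)]).
Proof.
move=> mW; have := measurable_fun_xsection P2 mW.
by congr measurable_fun; apply/funext => x /=; rewrite sec1E.
Qed.

Lemma mfun_sec2 (W : set (T1 * T2)) : measurable W ->
  measurable_fun [set: T2] (fun y : T2 => P1 [set x | W (x, y)]).
Proof.
move=> mW; have := measurable_fun_ysection P1 mW.
by congr measurable_fun; apply/funext => x /=; rewrite sec2E.
Qed.

Lemma fub_set (W : set (T1 * T2)) : measurable W ->
  \int[P1]_x P2 [set y | W (x, y)] = \int[P2]_y P1 [set x | W (x, y)].
Proof.
move=> mW.
have h1 x : \int[P2]_y (EFin \o \1_W) (x, y) = P2 [set y | W (x, y)].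
  transitivity (P2 ([set y | W (x, y)] `&` setT)); last by rewrite setIT.
  rewrite -integral_indic //; last first.
    by rewrite -sec1E; exact: measurable_xsection.
have h2 y : \int[P1]_x (EFin \o \1_W) (x, y) = P1 [set x | W (x, y)].
  transitivity (P1 ([set x | W (x, y)] `&` setT)); last by rewrite setIT.
  rewrite -integral_indic //; last first.
    by rewrite -sec2E; exact: measurable_ysection.
transitivity (\int[P1]_x \int[P2]_y (EFin \o \1_W) (x, y)).
  by apply: eq_integral => x _; rewrite h1.
transitivity (\int[P2]_y \int[P1]_x (EFin \o \1_W) (x, y)); last first.
  by apply: eq_integral => x _; rewrite h2.
apply: fubini_tonelli.
  by apply/measurable_EFinP; exact: measurable_indic.
by move=> x /=; rewrite lee_fin indicE.
Qed.

End FubSet.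

Section FinPiece.
Context (R : realType) d (T : measurableType d) (F : finType) (q : T -> F).
Hypothesis hq : forall s, measurable [set x | q x = s].

Lemma fin_pre (S : set F) : measurable [set x | S (q x)].
Proof.
have -> : [set x | S (q x)] = \bigcup_(s in S) [set x | q x = s].
  apply/seteqP; split => [x Sx | x [s Ss /= qs]]; first by exists (q x).
  by rewrite /= qs.
by apply: fin_bigcup_measurable => //; exact: finite_finset.
Qed.

Lemma piece (f : T -> R) (fs : F -> T -> R) :
  (forall s, measurable_fun setT (fs s)) -> (forall x, f x = fs (q x) x) ->
  measurable_fun setT f.
Proof.
move=> hf hfs _ Y mY; rewrite setTI.
have -> : f @^-1` Y = \bigcup_(s in setT) ([set x | q x = s] `&` (fs s @^-1` Y)).
  apply/seteqP; split => [x /= Yx | x [s _ [/= <-]]].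
    by exists (q x) => //; split => //=; rewrite -hfs.
  by rewrite /= hfs.
apply: fin_bigcup_measurable; first exact: finite_finset.
move=> s _; apply: measurableI => //; rewrite -[X in measurable X]setTI.
exact: hf.
Qed.

End FinPiece.

Section Meas.
Variables (R : realType) (N dh de : nat).
Local Notation G := (G R N).
Local Notation M := (M R N dh de).

Lemma mG_ent i j : measurable_fun setT (fun g : G => (g.1 : 'M[R]_3) i j).
Proof.
move=> _ U mU; rewrite setTI; apply: sub_sigma_algebra; left.
by exists i, j, U.
Qed.

Lemma mG_prm s : measurable [set g : G | g.2 = s].
Proof. by apply: sub_sigma_algebra; right; exists s. Qed.

Lemma mG_fun d (T : measurableType d) (f : T -> G) :
  (forall i j, measurable_fun setT (fun x => ((f x).1 : 'M[R]_3) i j)) ->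
  (forall s, measurable [set x | (f x).2 = s]) -> measurable_fun setT f.
Proof.
move=> he hp. have h : @measurable _ (Defs.G R N) = <<s @grp_gen R N>> by []. apply: (measurability _ h).
move=> _ [B hB <-].
case: hB => [[i [j [U [mU ->]]]] | [s ->]].
- exact: (he i j) measurableT U mU.
- by rewrite setTI; exact: hp s.
Qed.

Lemma mM_X i j : measurable_fun setT (fun Z : M => molX Z i j).
Proof.
move=> _ U mU; rewrite setTI; apply: sub_sigma_algebra; left.
by exists i, j, U.
Qed.

Lemma mM_H i k : measurable_fun setT (fun Z : M => molH Z i k).
Proof.
move=> _ U mU; rewrite setTI; apply: sub_sigma_algebra; right; left.
by exists i, k, U.
Qed.

Lemma mM_A i j k : measurable_fun setT (fun Z : M => molA Z i j k).
Proof.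
move=> _ U mU; rewrite setTI; apply: sub_sigma_algebra; right; right.
by exists i, j, k, U.
Qed.

Lemma mM_fun d (T : measurableType d) (f : T -> M) :
  (forall i j, measurable_fun setT (fun x => molX (f x) i j)) ->
  (forall i k, measurable_fun setT (fun x => molH (f x) i k)) ->
  (forall i j k, measurable_fun setT (fun x => molA (f x) i j k)) ->
  measurable_fun setT f.
Proof.
move=> hX hH hA. have h : @measurable _ (Defs.M R N dh de) = <<s @mol_gen R N dh de>> by []. apply: (measurability _ h).
move=> _ [B hB <-].
case: hB => [[i [j [U [mU ->]]]] | [[i [k [U [mU ->]]]] | [i [j [k [U [mU ->]]]]]]].
- exact: (hX i j) measurableT U mU.
- exact: (hH i k) measurableT U mU.
- exact: (hA i j k) measurableT U mU.
Qed.

Lemma so3_trP (a : SO3 R) :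
  (((a : 'M[R]_3)^T) *m ((a : 'M[R]_3)^T)^T == 1%:M) && (\det ((a : 'M[R]_3)^T) == 1).
Proof.
move: a => [a /andP[/eqP ha /eqP da]] /=.
by rewrite trmxK (mulmx1C ha) det_tr da !eqxx.
Qed.

Definition so3_tr (a : SO3 R) : SO3 R := MkSO3 (so3_trP a).

Definition ginv (g : G) : G := (so3_tr g.1, (g.2)^-1%g).
Definition gmulp (p : G * G) : G := gmul p.1 p.2.
Definition actp (p : G * M) : M := mol_act p.1 p.2.
End Meas.
Arguments ginv {R N}. Arguments gmulp {R N}. Arguments actp {R N dh de}. Arguments so3_tr {R}.
Section Meas2.
Variables (R : realType) (N dh de : nat).
Local Notation G := (G R N).
Local Notation M := (M R N dh de).

Lemma mfst_prm d (T : measurableType d) s :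
  measurable [set x : G * T | x.1.2 = s].
Proof.
have -> : [set x : G * T | x.1.2 = s] = [set g : G | g.2 = s] `*` setT.
  by apply/seteqP; split => -[g z] /=; [move=> h; split|case].
exact: measurableX (mG_prm s) measurableT.
Qed.

Lemma m_gmulp : measurable_fun setT (@gmulp R N).
Proof.
apply: mG_fun.
  move=> i j; rewrite /gmulp /gmul /=.
  under eq_fun do rewrite mxE.
  apply: measurable_sum => k; apply: measurable_funM.
    exact: measurableT_comp (mG_ent i k) measurable_fst.
  exact: measurableT_comp (mG_ent k j) measurable_snd.
move=> s; rewrite /gmulp /gmul /=.
pose q (x : G * G) := (x.1.2, x.2.2).
have -> : [set x : G * G | (x.1.2 * x.2.2)%g = s] =
          [set x | [set pq : {perm 'I_N} * {perm 'I_N} | (pq.1 * pq.2)%g = s] (q x)].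
  by [].
apply: fin_pre => -[t u].
have -> : [set x | q x = (t, u)] = [set g : G | g.2 = t] `*` [set g : G | g.2 = u].
  apply/seteqP; split => -[x y] /=; rewrite /q /=; first by case=> -> ->.
  by case=> -> ->.
exact: measurableX (mG_prm t) (mG_prm u).
Qed.

Lemma m_ginv : measurable_fun setT (@ginv R N).
Proof.
apply: mG_fun.
  by move=> i j /=; rewrite /ginv /=; under eq_fun do rewrite mxE; exact: mG_ent.
move=> s; rewrite /ginv /=.
have -> : [set x : G | (x.2)^-1%g = s] = [set g : G | g.2 = s^-1%g].
  by apply/seteqP; split => x /= h; [rewrite -h invgK|rewrite h invgK].
exact: mG_prm.
Qed.

Lemma m_actp : measurable_fun setT (@actp R N dh de).
Proof.
apply: mM_fun.
- move=> i j.
  apply: (@piece R _ _ _ (fun x : G * M => x.1.2) (@mfst_prm _ M) _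
    (fun s x => \sum_k molX x.2 (s^-1%g i) k * (x.1.1 : 'M[R]_3) j k)).
    move=> s; apply: measurable_sum => k; apply: measurable_funM.
      exact: measurableT_comp (mM_X _ k) measurable_snd.
    exact: measurableT_comp (mG_ent j k) measurable_fst.
  move=> x; rewrite /actp /mol_act /= !mxE; apply: eq_bigr => k _.
  by rewrite mxE.
- move=> i k.
  apply: (@piece R _ _ _ (fun x : G * M => x.1.2) (@mfst_prm _ M) _
    (fun s x => molH x.2 (s^-1%g i) k)).
    by move=> s; exact: measurableT_comp (mM_H _ k) measurable_snd.
  by move=> x; rewrite /actp /mol_act /= !mxE.
- move=> i j k.
  apply: (@piece R _ _ _ (fun x : G * M => x.1.2) (@mfst_prm _ M) _
    (fun s x => molA x.2 (s^-1%g i) (s^-1%g j) k)).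
    by move=> s; exact: measurableT_comp (mM_A _ _ k) measurable_snd.
  by move=> x; rewrite /actp /mol_act /=.
Qed.

End Meas2.

Section Grp.
Variables (R : realType) (N dh de : nat).
Local Notation G := (G R N).
Local Notation M := (M R N dh de).

Lemma so3_eq (a b : SO3 R) : (a : 'M[R]_3) = b -> a = b.
Proof.
case: a b => [a ha] [b hb] /= eab; subst b; congr MkSO3.
exact: bool_irrelevance.
Qed.

Lemma mol_eq (Z1 Z2 : mol R N dh de) : molX Z1 = molX Z2 -> molH Z1 = molH Z2 ->
  molA Z1 = molA Z2 -> Z1 = Z2.
Proof.
case: Z1 Z2 => [X1 H1 A1 c1] [X2 H2 A2 c2] /= eX eH eA; subst.
congr Mol; exact: bool_irrelevance.
Qed.

Lemma ginv_mul (g h : G) : gmul (ginv h) g = ginv (gmul (ginv g) h).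
Proof.
rewrite /gmul /ginv /=; congr (_, _).
  by apply: so3_eq => /=; rewrite trmx_mul trmxK.
by rewrite invMg invgK.
Qed.

Lemma permmx_mul m n (A : 'M[R]_(N, m)) (B : 'M[R]_(m, n)) (s : {perm 'I_N}) :
  (\matrix_(i, j) A (s i) j) *m B = \matrix_(i, j) (A *m B) (s i) j.
Proof.
apply/matrixP => i j; rewrite !mxE; apply: eq_bigr => k _; by rewrite mxE.
Qed.

Definition tau (h g : G) : G := gmul (gmul (so3_one R, h.2) g) (h.1, 1%g).

Lemma act_comp (g h : G) (Z : M) :
  mol_act g (mol_act h Z) = mol_act (tau h g) Z.
Proof.
have hp i : (((h.2 * g.2 * 1)^-1)%g i) = (h.2^-1)%g ((g.2^-1)%g i).
  by rewrite mulg1 invMg permM.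
apply: mol_eq => /=.
- rewrite permmx_mul; apply/matrixP => i j.
  rewrite [in LHS]mxE [in LHS]mxE [in RHS]mxE hp.
  by rewrite mul1mx trmx_mul mulmxA.
- by apply/matrixP => i k; rewrite !mxE hp.
- by apply/funext => i; apply/funext => j; rewrite !hp.
Qed.

End Grp.

Lemma mpre d1 d2 (T1 : measurableType d1) (T2 : measurableType d2)
  (f : T1 -> T2) (B : set T2) :
  measurable_fun setT f -> measurable B -> measurable (f @^-1` B).
Proof. by move=> mf mB; rewrite -[X in measurable X]setTI; exact: mf. Qed.

Lemma int_cst d (T : measurableType d) (R : realType) (P : probability T R)
  (c : \bar R) : (\int[P]_x c = c)%E.
Proof.
have -> : (\int[P]_x c = \int[P]_x (cst c) x)%E by [].
rewrite integral_cst //.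
have -> : (P : {measure set T -> \bar R}) setT = 1%E by exact: probability_setT.
by rewrite mule1.
Qed.

Section Inv.
Variables (R : realType) (N : nat).
Local Notation G := (G R N).
Variables (lam : probability G R) (hlam : left_invariant lam).
Local Open Scope ereal_scope.

Lemma mgmul_l (k : G) : measurable_fun setT (gmul k).
Proof.
have -> : gmul k = @gmulp R N \o (fun g : G => (k, g)) by [].
apply: measurableT_comp; first exact: m_gmulp.
by apply: measurable_fun_pair => //; exact: measurable_cst.
Qed.

Lemma mgmul_r (k : G) : measurable_fun setT (fun g : G => gmul g k).
Proof.
have -> : (fun g : G => gmul g k) = @gmulp R N \o (fun g : G => (g, k)) by [].
apply: measurableT_comp; first exact: m_gmulp.
by apply: measurable_fun_pair => //; exact: measurable_cst.
Qed.

Lemma L_inv (B : set G) : measurable B -> lam (ginv @^-1` B) = lam B.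
Proof.
move=> mB.
pose W := [set p : G * G | B (gmul (ginv p.1) p.2)].
have mW : measurable W.
  apply: (mpre (f := fun p : G * G => gmulp (ginv p.1, p.2))) => //.
  apply: measurableT_comp (@m_gmulp R N) _.
  apply: measurable_fun_pair => //.
  exact: measurableT_comp (@m_ginv R N) measurable_fst.
have := fub_set lam lam mW.
have e1 x : lam [set y | W (x, y)] = lam B by exact: (hlam (ginv x) mB).
have e2 y : lam [set x | W (x, y)] = lam (ginv @^-1` B).
  have -> : [set x | W (x, y)] = gmul (ginv y) @^-1` (ginv @^-1` B).
    by apply/funext => x; rewrite /W /= ginv_mul.
  apply: hlam; exact: mpre (@m_ginv R N) mB.
rewrite (eq_integral (fun _ => lam B)); last by move=> x _; rewrite e1.
rewrite [X in _ = X -> _](eq_integral (fun _ => lam (ginv @^-1` B))); last first.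
  by move=> y _; rewrite e2.
by rewrite !int_cst => ->.
Qed.

Lemma R_inv (B : set G) (k : G) : measurable B -> lam [set g | B (gmul g k)] = lam B.
Proof.
move=> mB.
have mBk : measurable [set g | B (gmul g k)] by exact: mpre (mgmul_r k) mB.
rewrite -L_inv //.
have -> : ginv @^-1` [set g | B (gmul g k)] =
    gmul (ginv k) @^-1` (ginv @^-1` B).
  by apply/funext => x; rewrite /= ginv_mul.
rewrite hlam ?L_inv //; exact: mpre (@m_ginv R N) mB.
Qed.

Lemma tau_inv (B : set G) (h : G) : measurable B -> lam [set g | B (tau h g)] = lam B.
Proof.
move=> mB; rewrite /tau.
have -> : [set g | B (gmul (gmul (so3_one R, h.2) g) (h.1, 1%g))] =
   gmul (so3_one R, h.2) @^-1` [set g | B (gmul g (h.1, 1%g))] by [].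
rewrite hlam; first exact: R_inv.
exact: mpre (mgmul_r _) mB.
Qed.

End Inv.

Section Mix.
Variables (R : realType) (N dh de : nat).
Local Notation G := (G R N).
Local Notation M := (M R N dh de).
Variables (lam : probability G R) (hlam : left_invariant lam).
Local Open Scope ereal_scope.

Lemma mW (phi : M -> M) (A : set M) : measurable_fun setT phi -> measurable A ->
  measurable [set p : G * M | A (mol_act p.1 (phi p.2))].
Proof.
move=> mphi mA.
apply: (mpre (f := fun p : G * M => actp (p.1, phi p.2))) => //.
apply: measurableT_comp; first exact: m_actp.
apply: measurable_fun_pair => //.
exact: measurableT_comp mphi measurable_snd.
Qed.

Lemma mix (P : probability M R) (phi : M -> M) (A : set M) :
  measurable_fun setT phi -> measurable A ->
  \int[P]_Z lam [set g | A (mol_act g (phi Z))] =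
  \int[lam]_g P [set Z | A (mol_act g (phi Z))].
Proof.
move=> mphi mA; exact: esym (fub_set lam P (mW mphi mA)).
Qed.

Lemma mfun_a (P : probability M R) (phi : M -> M) (A : set M) :
  measurable_fun setT phi -> measurable A ->
  measurable_fun setT (fun g => P [set Z | A (mol_act g (phi Z))]).
Proof. move=> mphi mA; exact: (mfun_sec1 P (mW mphi mA)). Qed.

Lemma mfun_b (phi : M -> M) (A : set M) :
  measurable_fun setT phi -> measurable A ->
  measurable_fun setT (fun Z => lam [set g | A (mol_act g (phi Z))]).
Proof. move=> mphi mA; exact: (mfun_sec2 lam (mW mphi mA)). Qed.

Lemma hr_eq (P : probability M R) (A : set M) : measurable A ->
  haar_randomize lam P A = \int[lam]_g P [set Z | A (mol_act g Z)].
Proof. by move=> mA; exact: (mix P (@measurable_id _ M setT) mA). Qed.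

End Mix.

Section MuEq.
Variables (R : realType) (N dh de : nat).
Local Notation G := (G R N).
Local Notation M := (M R N dh de).
Variables (lam : probability G R) (hlam : left_invariant lam).
Variables (mu : probability M R) (hmu : G_invariant mu).
Variables (Psi : M -> M) (mPsi : measurable_fun setT Psi)
  (D : set M) (mD : measurable D) (hD : mu (~` D) = 0%E)
  (Psi_orbit : forall Z, D Z -> exists g : G, Psi Z = mol_act g Z).
Local Open Scope ereal_scope.

Lemma mu_eq (A : set M) : measurable A ->
  mu A = \int[lam]_g mu [set Z | A (mol_act g (Psi Z))].
Proof.
move=> mA.
have mid : measurable_fun setT (@id M) by exact: measurable_id.
transitivity (\int[lam]_g mu [set Z | A (mol_act g Z)]).
  rewrite -[LHS](int_cst lam); apply: eq_integral => g _.
  by rewrite -(hmu g mA).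
rewrite -(mix lam mu mid mA) -(mix lam mu mPsi mA).
apply: ae_eq_integral => //.
- exact: (mfun_b lam mid mA).
- exact: (mfun_b lam mPsi mA).
exists (~` D); split => //; first exact: measurableC.
move=> Z /= hZ DZ; apply: hZ => _.
have [h ->] := Psi_orbit DZ.
have mB : measurable [set g : G | A (mol_act g Z)].
  apply: (mpre (f := fun g : G => actp (g, Z))) => //.
  apply: measurableT_comp; first exact: m_actp.
  by apply: measurable_fun_pair => //; exact: measurable_cst.
rewrite -(tau_inv hlam h mB).
by congr (lam _); apply/funext => g /=; rewrite act_comp.
Qed.

End MuEq.

Lemma abs_le (R : realType) (x y c : \bar R) : x \is a fin_num -> y \is a fin_num ->
  c \is a fin_num -> (x <= y + c)%E -> (y <= x + c)%E -> (`|x - y| <= c)%E.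
Proof.
move: x y c => [x| |] [y| |] [c| |] //= _ _ _.
rewrite !lee_fin => h1 h2; rewrite ler_norml; apply/andP; split; lra.
Qed.

Lemma abs_le_inv (R : realType) (x y c : \bar R) : x \is a fin_num -> y \is a fin_num ->
  c \is a fin_num -> (`|x - y| <= c)%E -> (x <= y + c)%E /\ (y <= x + c)%E.
Proof.
move: x y c => [x| |] [y| |] [c| |] //= _ _ _.
rewrite !lee_fin ler_norml => /andP[h1 h2]; split; lra.
Qed.

Lemma int_fin d (T : measurableType d) (R : realType) (P : probability T R)
  (f : T -> \bar R) : measurable_fun setT f -> (forall x, 0 <= f x <= 1)%E ->
  (\int[P]_x f x)%E \is a fin_num.
Proof.
move=> mf hf; rewrite ge0_fin_numE; last first.
  by apply: integral_ge0 => x _; case/andP: (hf x).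
apply: (@le_lt_trans _ _ (\int[P]_x (cst 1%E) x)%E); last by rewrite int_cst ltry.
apply: ge0_le_integral => //.
- by move=> x _; case/andP: (hf x).
- by move=> x _; case/andP: (hf x).
Qed.

Unset Implicit Arguments. Set Strict Implicit. Set Printing Implicit Defensive.

Theorem mainTheorem3 (R : realType) (N dh de : nat)
  (hN : (1 <= N)%N) (hdh : (1 <= dh)%N) (hde : (1 <= de)%N)
  (lam : probability (G R N) R) (hlam : left_invariant lam)
  (mu : probability (M R N dh de) R) (hmu : G_invariant mu)
  (hstab : {ae mu, forall Z : M R N dh de, forall g : G R N, mol_act g Z = Z -> g = gone})
  (Psi : M R N dh de -> M R N dh de) (mPsi : measurable_fun setT Psi)
  (D : set (M R N dh de)) (mD : measurable D) (hD : mu (~` D) = 0%E)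
  (D_inv : forall (g : G R N) Z, D Z -> D (mol_act g Z))
  (Psi_orbit : forall Z, D Z -> exists g : G R N, Psi Z = mol_act g Z)
  (Psi_inv : forall (g : G R N) Z, D Z -> Psi (mol_act g Z) = Psi Z)
  (eps : R) (heps : 0 < eps)
  (mueq : probability (M R N dh de) R) (hmueq : G_invariant mueq)
  (hTV : (TV mueq mu < eps%:E)%E)
  (Theta : Type) (nut : Theta -> probability (M R N dh de) R)
  (nut_S : forall t B, measurable B -> Psi @` D `<=` B -> nut t B = 1%E)
  (hinf : (ereal_inf (range (fun t => TV (nut t) (pushforward mu Psi)))
           <= TV (pushforward mueq Psi) (pushforward mu Psi))%E) :
  exists t : Theta, (TV (haar_randomize lam (nut t)) mu < eps%:E)%E.
Proof.
Local Open Scope ereal_scope.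
have hTVp : TV (pushforward mueq Psi) (pushforward mu Psi) <= TV mueq mu.
  apply: ereal_sup_le => _ [A mA <-]; exists (Psi @^-1` A) => //.
  exact: mpre mPsi mA.
have : ereal_inf (range (fun t => TV (nut t) (pushforward mu Psi))) < eps%:E.
  by apply: (le_lt_trans hinf); exact: le_lt_trans hTVp hTV.
move=> /ereal_inf_lt [_ [t _ <-]] ht.
exists t.
set nu := pushforward mu Psi in ht *.
set c := TV (nut t) nu in ht *.
have c0 : 0 <= c.
  apply: (@le_trans _ _ (`|nut t set0 - nu set0|)); first exact: abse_ge0.
  by apply: ereal_sup_ubound; exists set0.
have cfin : c \is a fin_num.
  by rewrite ge0_fin_numE //; exact: lt_trans ht (ltry _).
apply: le_lt_trans ht.
apply: ge_ereal_sup => _ [A mA <-].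
have mid : measurable_fun setT (@id (M R N dh de)) by exact: measurable_id.
rewrite (hr_eq lam (nut t) mA) (mu_eq hlam hmu mPsi mD hD Psi_orbit mA).
set a := fun g => nut t [set Z | A (mol_act g Z)].
set b := fun g => mu [set Z | A (mol_act g (Psi Z))].
have ma : measurable_fun setT a := mfun_a (nut t) mid mA.
have mb : measurable_fun setT b := mfun_a mu mPsi mA.
have mE g : measurable [set Z | A (mol_act g Z)].
  apply: (mpre (f := fun Z => actp (g, Z))) => //.
  apply: measurableT_comp; first exact: m_actp.
  by apply: measurable_fun_pair => //; exact: measurable_cst.
have hab g : `|a g - b g| <= c.
  by apply: ereal_sup_ubound; exists [set Z | A (mol_act g Z)].
have a01 g : 0 <= a g <= 1.
  by rewrite measure_ge0 /= -(probability_setT (nut t)) le_measure // inE.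
have b01 g : 0 <= b g <= 1.
  rewrite measure_ge0 /= -(probability_setT mu) le_measure // inE //.
  exact: mpre mPsi (mE g).
have afin g : a g \is a fin_num by rewrite fin_num_measure // mE.
have bfin g : b g \is a fin_num.
  by rewrite fin_num_measure //; exact: mpre mPsi (mE g).
have hab1 g : a g <= b g + c by case: (@abs_le_inv _ _ _ _ (afin g) (bfin g) cfin (hab g)).
have hab2 g : b g <= a g + c by case: (@abs_le_inv _ _ _ _ (afin g) (bfin g) cfin (hab g)).
apply: abs_le.
- exact: int_fin.
- exact: int_fin.
- exact: cfin.
- apply: (@le_trans _ _ (\int[lam]_g (b g + c))).
    apply: ge0_le_integral => //; last by move=> g _; exact: hab1.
    by apply: emeasurable_funD => //; exact: measurable_cst.
  rewrite ge0_integralD //; first by rewrite int_cst.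
  all: try (by move=> g _; have /andP[] := b01 g); try (by move=> ? ?); try exact: measurable_cst.
- apply: (@le_trans _ _ (\int[lam]_g (a g + c))).
    apply: ge0_le_integral => //; last by move=> g _; exact: hab2.
    by apply: emeasurable_funD => //; exact: measurable_cst.
  rewrite ge0_integralD //; first by rewrite int_cst.
  all: try (by move=> g _; have /andP[] := a01 g); try (by move=> ? ?); try exact: measurable_cst.
Qed.
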